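(* Let $A$ be a superring and $S\subseteq A$ a Marshall coherent subset with $0\notin S$. Then: (i) if $A$ is full, $A/_mS$ is full; (ii) if $A$ is a superdomain, $A/_mS$ is a superdomain; (iii) if $A$ is a superfield, $A/_mS$ is a superfield.
   Context: Multivalued operations are extended to subsets by unions. A superring is a structure $(S,+,\cdot,-,0,1)$ with multivalued addition and multiplication such that $(S,+,-,0)$ is a commutative multigroup, $(S,\cdot,1)$ is a commutative multimonoid, $a\cdot0=\{0\}$, $c(a+b)\subseteq ca+cb$, and $-(ab)=(-a)b=a(-b)$ (multigroup axioms: $c\in ab\Rightarrow a\in c\,r(b)$ and $b\in r(a)c$; $b\in a\cdot1\iff a=b$; $(ab)c\subseteq a(bc)$; $ab=ba$; multimonoid: the last two and $a\in 1\cdot a$). It is full if $c(a+b)=ca+cb$ for all $a,b,c$. A superdomain is a nontrivial superring in which $0\in ab$ iff $a=0$ or $b=0$; a superfield is a superdomain in which every $a\ne0$ has some $b$ with $1\in ab$. A subset $S$ of a superring $A$ is Marshall coherent if it is multiplicative ($1\in S$, $S\cdot S\subseteq S$) and whenever $x,a\in A$ and $x\in as$ for some $s\in S$, there are $P,Q\subseteq S$ with $xP=aQ$. For $a,b\in A$, $a\sim_S b$ iff there are nonempty $X,Y\subseteq S$ with $aX=bY$. The Marshall quotient $A/_mS$ is the set of $\sim_S$-classes $[a]$ with: $[c]\in[a]+[b]$ iff there exist $c'\sim c$, $a'\sim a$, $b'\sim b$ with $c'\in a'+b'$; $[c]\in[a][b]$ iff there exist $c'\sim c,a'\sim a,b'\sim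 b$ with $c'\in a'b'$; $-[a]:=[-a]$; zero $[0]$, unit $[1]$. *)

(* Defs.v *)
From Stdlib Require Import ClassicalEpsilon.

Set Implicit Arguments.

(* Operations of a structure (S,+,.,-,0,1) with multivalued + and . .
   Convention: [sadd a b c] means  c \in a + b,  [smul a b c] means c \in a b. *)
Record SROps (T : Type) := MkSROps {
  sadd  : T -> T -> T -> Prop;
  smul  : T -> T -> T -> Prop;
  sneg  : T -> T;
  szero : T;
  sone  : T }.

Section SRDefs.
Variables (T : Type) (R : SROps T).
Local Notation add := (sadd R).
Local Notation mul := (smul R).
Local Notation neg := (sneg R).
Local Notation z := (szero R).
Local Notation o := (sone R).

Definition comm_multigroup : Prop :=
  (forall a b c, add a b c -> add c (neg b) a /\ add (neg a) c b) /\
  (forall a b, add a z b <-> a = b) /\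
  (forall a b c x, (exists y, add a b y /\ add y c x) ->
                   (exists y, add b c y /\ add a y x)) /\
  (forall a b x, add a b x <-> add b a x).

Definition comm_multimonoid : Prop :=
  (forall a b c x, (exists y, mul a b y /\ mul y c x) ->
                   (exists y, mul b c y /\ mul a y x)) /\
  (forall a b x, mul a b x <-> mul b a x) /\
  (forall a, mul o a a).

Definition superring : Prop :=
  comm_multigroup /\ comm_multimonoid /\
  (forall a x, mul a z x <-> x = z) /\
  (forall a b c x, (exists y, add a b y /\ mul c y x) ->
                   (exists u v, mul c a u /\ mul c b v /\ add u v x)) /\
  (forall a b x, (exists y, mul a b y /\ x = neg y) <-> mul (neg a) b x) /\
  (forall a b x, (exists y, mul a b y /\ x = neg y) <-> mul a (neg b) x).

Definition full_superring : Prop :=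
  superring /\
  (forall a b c x, (exists y, add a b y /\ mul c y x) <->
                   (exists u v, mul c a u /\ mul c b v /\ add u v x)).

Definition superdomain : Prop :=
  superring /\ z <> o /\
  (forall a b, mul a b z <-> (a = z \/ b = z)).

Definition superfield : Prop :=
  superdomain /\ (forall a, a <> z -> exists b, mul a b o).

Definition mul_set (x : T) (P : T -> Prop) : T -> Prop :=
  fun y => exists p, P p /\ mul x p y.

Definition set_eq (X Y : T -> Prop) : Prop := forall y, X y <-> Y y.

Definition nonempty (X : T -> Prop) : Prop := exists x, X x.

Definition subset (X Y : T -> Prop) : Prop := forall x, X x -> Y x.

Definition marshall_coherent (S : T -> Prop) : Prop :=
  S o /\
  (forall a b x, S a -> S b -> mul a b x -> S x) /\
  (forall x a s, S s -> mul a s x ->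
     exists P Q, subset P S /\ subset Q S /\ nonempty P /\ nonempty Q /\
                 set_eq (mul_set x P) (mul_set a Q)).

Definition msim (S : T -> Prop) (a b : T) : Prop :=
  exists X Y, subset X S /\ subset Y S /\ nonempty X /\ nonempty Y /\
              set_eq (mul_set a X) (mul_set b Y).

Definition mclass (S : T -> Prop) (a : T) : T -> Prop := fun b => msim S a b.

End SRDefs.

Definition mquot_carrier {T : Type} (R : SROps T) (S : T -> Prop) : Type :=
  { C : T -> Prop | exists a, C = mclass R S a }.

Definition mrep {T : Type} {R : SROps T} {S : T -> Prop}
  (X : mquot_carrier R S) : T :=
  proj1_sig (constructive_indefinite_description _ (proj2_sig X)).

Definition mcl {T : Type} (R : SROps T) (S : T -> Prop) (a : T) :
  mquot_carrier R S := exist _ (mclass R S a) (ex_intro _ a eq_refl).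

Definition mquot {T : Type} (R : SROps T) (S : T -> Prop) :
  SROps (mquot_carrier R S) :=
  MkSROps
    (fun X Y Z => exists a b c,
        proj1_sig X = mclass R S a /\ proj1_sig Y = mclass R S b /\
        proj1_sig Z = mclass R S c /\
        exists c' a' b', msim R S c' c /\ msim R S a' a /\ msim R S b' b /\
                         sadd R a' b' c')
    (fun X Y Z => exists a b c,
        proj1_sig X = mclass R S a /\ proj1_sig Y = mclass R S b /\
        proj1_sig Z = mclass R S c /\
        exists c' a' b', msim R S c' c /\ msim R S a' a /\ msim R S b' b /\
                         smul R a' b' c')
    (fun X => mcl R S (sneg R (mrep X)))
    (mcl R S (szero R))
    (mcl R S (sone R)).

(* Main.v *)
Require Import Defs.
From Stdlib Require Import Setoid ClassicalEpsilon FunctionalExtensionality PropExtensionality ProofIrrelevance.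

Section Quot.
Variables (T : Type) (A : SROps T) (S : T -> Prop).
Hypothesis HA : superring A.
Hypothesis HS : marshall_coherent A S.

Local Notation add := (sadd A).
Local Notation mul := (smul A).
Local Notation neg := (sneg A).
Local Notation z := (szero A).
Local Notation o := (sone A).
Local Notation sim := (msim A S).

Lemma add_rev a b c : add a b c -> add c (neg b) a /\ add (neg a) c b.
Proof. pose proof HA as [[H _] _]. apply H. Qed.
Lemma add_zero a b : add a z b <-> a = b.
Proof. pose proof HA as [[_ [H _]] _]. apply H. Qed.
Lemma add_assoc a b c x : (exists y, add a b y /\ add y c x) -> (exists y, add b c y /\ add a y x).
Proof. pose proof HA as [[_ [_ [H _]]] _]. apply H. Qed.
Lemma add_comm a b x : add a b x <-> add b a x.
Proof. pose proof HA as [[_ [_ [_ H]]] _]. apply H. Qed.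
Lemma mul_assoc a b c x : (exists y, mul a b y /\ mul y c x) -> (exists y, mul b c y /\ mul a y x).
Proof. pose proof HA as [_ [[H _] _]]. apply H. Qed.
Lemma mul_comm a b x : mul a b x <-> mul b a x.
Proof. pose proof HA as [_ [[_ [H _]] _]]. apply H. Qed.
Lemma mul_one a : mul o a a.
Proof. pose proof HA as [_ [[_ [_ H]] _]]. apply H. Qed.
Lemma mul_zero a x : mul a z x <-> x = z.
Proof. pose proof HA as [_ [_ [H _]]]. apply H. Qed.
Lemma distr a b c x : (exists y, add a b y /\ mul c y x) -> (exists u v, mul c a u /\ mul c b v /\ add u v x).
Proof. pose proof HA as [_ [_ [_ [H _]]]]. apply H. Qed.
Lemma negl a b x : (exists y, mul a b y /\ x = neg y) <-> mul (neg a) b x.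
Proof. pose proof HA as [_ [_ [_ [_ [H _]]]]]. apply H. Qed.
Lemma negr a b x : (exists y, mul a b y /\ x = neg y) <-> mul a (neg b) x.
Proof. pose proof HA as [_ [_ [_ [_ [_ H]]]]]. apply H. Qed.

Lemma add_negself a : add a (neg a) z.
Proof. assert (H : add a z a) by (apply add_zero; reflexivity).
  apply add_rev in H. apply add_comm. apply H. Qed.
Lemma neg_neg a : neg (neg a) = a.
Proof. assert (H : add a z a) by (apply add_zero; reflexivity).
  apply add_rev in H. destruct H as [_ H]. apply add_rev in H. destruct H as [_ H].
  apply add_zero in H. exact H. Qed.
Lemma neg_z : neg z = z.
Proof. assert (H : add z z z) by (apply add_zero; reflexivity).
  apply add_rev in H. destruct H as [H _]. apply add_comm in H. apply add_zero in H. exact H. Qed.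
Lemma mul_zl a x : mul z a x <-> x = z.
Proof. rewrite mul_comm. apply mul_zero. Qed.
Lemma mul_ne a b : exists x, mul a b x.
Proof. destruct (distr b (neg b) a z) as [u [v [H _]]].
  - exists z. split. apply add_negself. apply mul_zero. reflexivity.
  - exists u. exact H. Qed.
Lemma mul_assoc' a b c x : (exists y, mul b c y /\ mul a y x) -> (exists y, mul a b y /\ mul y c x).
Proof. intros [y [H1 H2]]. apply mul_comm in H2.
  destruct (mul_assoc b c a x) as [w [H3 H4]]. eauto.
  apply mul_comm in H4.
  destruct (mul_assoc c a b x) as [v [H5 H6]]. eauto.
  exists v. split. exact H5. apply mul_comm. exact H6. Qed.
Lemma mul_swap a b c y x : mul a b y -> mul y c x -> exists p, mul a c p /\ mul p b x.
Proof. intros H1 H2. destruct (mul_assoc a b c x) as [m [H3 H4]]. eauto.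
  apply mul_comm in H3. apply mul_assoc'. eauto. Qed.

Lemma S1 : S o.
Proof. destruct HS as [H _]. exact H. Qed.
Lemma Smul a b x : S a -> S b -> mul a b x -> S x.
Proof. destruct HS as [_ [H _]]. apply H. Qed.
Lemma coh a s x : S s -> mul a s x -> sim x a.
Proof. destruct HS as [_ [_ H]]. intros Hs Hm. destruct (H x a s Hs Hm) as [P [Q HPQ]].
  exists P, Q. exact HPQ. Qed.
Lemma coh' s a x : S s -> mul s a x -> sim x a.
Proof. intros Hs Hm. apply mul_comm in Hm. eapply coh; eauto. Qed.

Lemma sim_refl a : sim a a.
Proof. exists (fun p => p = o), (fun p => p = o).
  split; [|split; [|split; [|split]]].
  - intros x Hx. subst. apply S1.
  - intros x Hx. subst. apply S1.
  - exists o. reflexivity.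
  - exists o. reflexivity.
  - intro y. tauto. Qed.
Lemma sim_sym a b : sim a b -> sim b a.
Proof. intros [X [Y [H1 [H2 [H3 [H4 H5]]]]]]. exists Y, X.
  split; [|split; [|split; [|split]]]; auto. intro y. symmetry. apply H5. Qed.

Definition prodset (P Q : T -> Prop) : T -> Prop :=
  fun r => exists p q, P p /\ Q q /\ mul p q r.

Lemma trans_half a b c X Y Z W :
  set_eq (mul_set A a X) (mul_set A b Y) -> set_eq (mul_set A b Z) (mul_set A c W) ->
  forall q, mul_set A a (prodset X Z) q -> mul_set A c (prodset W Y) q.
Proof. intros E1 E2 q [p [[x [zz [Hx [Hz Hp]]]] Hq]].
  destruct (mul_assoc' a x zz q) as [r [Hr1 Hr2]]. eauto.
  destruct (proj1 (E1 r) (ex_intro _ x (conj Hx Hr1))) as [y [Hy Hby]].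
  destruct (mul_assoc b y zz q) as [m [Hm1 Hm2]]. eauto.
  apply mul_comm in Hm1.
  destruct (mul_assoc' b zz y q) as [k [Hk1 Hk2]]. eauto.
  destruct (proj1 (E2 k) (ex_intro _ zz (conj Hz Hk1))) as [w [Hw Hcw]].
  destruct (mul_assoc c w y q) as [n [Hn1 Hn2]]. eauto.
  exists n. split. exists w, y. auto. exact Hn2. Qed.

Lemma sim_trans a b c : sim a b -> sim b c -> sim a c.
Proof. intros [X [Y [HX [HY [[x Hx] [[y Hy] E1]]]]]] [Z [W [HZ [HW [[zz Hz] [[w Hw] E2]]]]]].
  exists (prodset X Z), (prodset W Y).
  split; [|split; [|split; [|split]]].
  - intros r [p [q [Hp [Hq Hr]]]]. eapply Smul; [apply HX; exact Hp | apply HZ; exact Hq | exact Hr].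
  - intros r [p [q [Hp [Hq Hr]]]]. eapply Smul; [apply HW; exact Hp | apply HY; exact Hq | exact Hr].
  - destruct (mul_ne x zz) as [r Hr]. exists r, x, zz. auto.
  - destruct (mul_ne w y) as [r Hr]. exists r, w, y. auto.
  - intro q. split.
    + apply trans_half with (b := b); auto.
    + apply trans_half with (b := b); intro t; symmetry; auto.
Qed.

Lemma sim_neg a b : sim a b -> sim (neg a) (neg b).
Proof. intros [X [Y [HX [HY [H1 [H2 E]]]]]]. exists X, Y.
  split; [|split; [|split; [|split]]]; auto.
  intro q. split.
  - intros [p [Hp Hq]]. apply negl in Hq.
    destruct Hq as [w [Hw ->]].
    destruct (proj1 (E w) (ex_intro _ p (conj Hp Hw))) as [r [Hr Hw']].
    exists r. split. exact Hr. apply negl. exists w. split; auto.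
  - intros [p [Hp Hq]]. apply negl in Hq.
    destruct Hq as [w [Hw ->]].
    destruct (proj2 (E w) (ex_intro _ p (conj Hp Hw))) as [r [Hr Hw']].
    exists r. split. exact Hr. apply negl. exists w. split; auto.
Qed.

Lemma sim_z a : sim a z -> exists s, S s /\ forall x, mul a s x <-> x = z.
Proof. intros [X [Y [HX [HY [[s Hs] [[y Hy] E]]]]]]. exists s. split. auto.
  intro x. split.
  - intro H. destruct (proj1 (E x) (ex_intro _ s (conj Hs H))) as [p [_ Hp]].
    apply mul_zl in Hp. exact Hp.
  - intros ->. destruct (mul_ne a s) as [w Hw].
    destruct (proj1 (E w) (ex_intro _ s (conj Hs Hw))) as [p [_ Hp]].
    apply mul_zl in Hp. subst. exact Hw.
Qed.

Definition AddR a b c := exists c' a' b', sim c' c /\ sim a' a /\ sim b' b /\ add a' b' c'.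
Definition MulR a b c := exists c' a' b', sim c' c /\ sim a' a /\ sim b' b /\ mul a' b' c'.

Lemma sim_sub a b X Y : set_eq (mul_set A a X) (mul_set A b Y) -> forall s p, X s -> mul a s p ->
  exists t, Y t /\ mul b t p.
Proof. intros E s p Hs Hp. destruct (proj1 (E p) (ex_intro _ s (conj Hs Hp))) as [t [Ht Hb]].
  eauto. Qed.

Lemma AddR_rev a b c : AddR a b c -> AddR c (neg b) a /\ AddR (neg a) c b.
Proof. intros [c' [a' [b' [H1 [H2 [H3 H4]]]]]]. apply add_rev in H4. destruct H4 as [H4 H5].
  split.
  - exists a', c', (neg b'). repeat split; auto. apply sim_neg; auto.
  - exists b', (neg a'), c'. repeat split; auto. apply sim_neg; auto. Qed.

Lemma AddR_zero a b : AddR a z b <-> sim a b.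
Proof. split.
  - intros [c' [a' [b' [H1 [H2 [H3 H4]]]]]].
    destruct (sim_z _ H3) as [s [Hs Hb]].
    assert (E : sim a' c').
    { exists (fun p => p = s), (fun p => p = s). split; [|split; [|split; [|split]]].
      - intros x ->; auto.
      - intros x ->; auto.
      - exists s; reflexivity.
      - exists s; reflexivity.
      - intro y. split.
        + intros [p [-> Hp]]. exists s. split; auto.
          apply mul_comm in Hp. apply add_rev in H4. destruct H4 as [H4 _].
          destruct (distr c' (neg b') s y) as [u [v [Hu [Hv Huv]]]]. eauto.
          apply negr in Hv. destruct Hv as [w [Hw ->]]. apply mul_comm, Hb in Hw. subst w.
          rewrite neg_z in Huv. apply add_zero in Huv. subst. apply mul_comm. exact Hu.
        + intros [p [-> Hp]]. exists s. split; auto.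
          apply mul_comm in Hp.
          destruct (distr a' b' s y) as [u [v [Hu [Hv Huv]]]]. eauto.
          apply mul_comm, Hb in Hv. subst v. apply add_zero in Huv. subst. apply mul_comm. exact Hu. }
    eapply sim_trans. apply sim_sym, H2. eapply sim_trans. apply E. exact H1.
  - intro H. exists a, a, z. repeat split; auto using sim_refl. apply add_zero. reflexivity.
Qed.

Lemma L y c x t p : add y c x -> mul t y p -> exists q r, mul t x q /\ mul t c r /\ add p r q.
Proof. intros H Hp. apply add_rev in H. destruct H as [H _].
  destruct (distr x (neg c) t p) as [q [r' [Hq [Hr Hqr]]]]. eauto.
  apply negr in Hr. destruct Hr as [r [Hr ->]].
  apply add_rev in Hqr. destruct Hqr as [Hqr _]. rewrite neg_neg in Hqr. eauto. Qed.

Lemma AddR_assoc a b c y x : AddR a b y -> AddR y c x -> exists y', AddR b c y' /\ AddR a y' x.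
Proof. intros [y1 [a1 [b1 [Hy1 [Ha1 [Hb1 H1]]]]]] [x2 [y2 [c2 [Hx2 [Hy2 [Hc2 H2]]]]]].
  assert (E : sim y1 y2) by (eapply sim_trans; [exact Hy1 | apply sim_sym; exact Hy2]).
  destruct E as [X [Y [HX [HY [[s Hs] [_ E]]]]]].
  destruct (mul_ne y1 s) as [p Hp].
  destruct (sim_sub _ _ _ _ E s p Hs Hp) as [t [Ht Htp]]. apply mul_comm in Hp, Htp.
  destruct (L y2 c2 x2 t p H2 Htp) as [q [r [Hq [Hr Hpr]]]].
  destruct (distr a1 b1 s p) as [u [v [Hu [Hv Huv]]]]. eauto.
  destruct (add_assoc u v r q) as [w [Hw1 Hw2]]. eauto.
  exists w. split.
  - exists w, v, r. repeat split; auto using sim_refl.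
    + eapply sim_trans. eapply coh'. apply HX; exact Hs. exact Hv. exact Hb1.
    + eapply sim_trans. eapply coh'. apply HY; exact Ht. exact Hr. exact Hc2.
  - exists q, u, w. repeat split; auto using sim_refl.
    + eapply sim_trans. eapply coh'. apply HY; exact Ht. exact Hq. exact Hx2.
    + eapply sim_trans. eapply coh'. apply HX; exact Hs. exact Hu. exact Ha1.
Qed.

Lemma MulR_assoc a b c y x : MulR a b y -> MulR y c x -> exists y', MulR b c y' /\ MulR a y' x.
Proof. intros [y1 [a1 [b1 [Hy1 [Ha1 [Hb1 H1]]]]]] [x2 [y2 [c2 [Hx2 [Hy2 [Hc2 H2]]]]]].
  assert (E : sim y2 y1) by (eapply sim_trans; [exact Hy2 | apply sim_sym; exact Hy1]).
  destruct E as [X2 [X1 [HX2 [HX1 [[t Ht] [_ E]]]]]].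
  destruct (mul_ne x2 t) as [q Hq].
  destruct (mul_swap _ _ _ _ _ H2 Hq) as [p [Hp1 Hp2]].
  destruct (sim_sub _ _ _ _ E t p Ht Hp1) as [s [Hs Hsp]].
  destruct (mul_assoc y1 s c2 q) as [m [Hm1 Hm2]]. eauto.
  destruct (mul_assoc a1 b1 m q) as [n [Hn1 Hn2]]. eauto.
  exists n. split.
  - exists n, b1, m. repeat split; auto using sim_refl.
    eapply sim_trans. eapply coh'. apply HX1; exact Hs. exact Hm1. exact Hc2.
  - exists q, a1, n. repeat split; auto using sim_refl.
    eapply sim_trans. eapply coh. apply HX2; exact Ht. exact Hq. exact Hx2.
Qed.

Lemma MulR_zero a x : MulR a z x <-> sim x z.
Proof. split.
  - intros [x' [a' [b' [H1 [H2 [H3 H4]]]]]].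
    destruct (sim_z _ H3) as [s [Hs Hb]].
    assert (E : forall w, mul x' s w <-> w = z).
    { intro w. split.
      - intro Hw. destruct (mul_assoc a' b' s w) as [m [Hm1 Hm2]]. eauto.
        apply Hb in Hm1. subst m. apply mul_zero in Hm2. exact Hm2.
      - intros ->. destruct (mul_ne x' s) as [w0 Hw0]. assert (w0 = z).
        { destruct (mul_assoc a' b' s w0) as [m [Hm1 Hm2]]. eauto.
          apply Hb in Hm1. subst m. apply mul_zero in Hm2. exact Hm2. }
        subst. exact Hw0. }
    eapply sim_trans. apply sim_sym, H1.
    exists (fun p => p = s), (fun p => p = s). split; [|split; [|split; [|split]]].
    + intros w ->; auto.
    + intros w ->; auto.
    + exists s; reflexivity.
    + exists s; reflexivity.
    + intro y. split.
      * intros [p [-> Hp]]. exists s. split; auto. apply E in Hp. subst. apply mul_zl. reflexivity.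
      * intros [p [-> Hp]]. exists s. split; auto. apply mul_zl in Hp. subst. apply E. reflexivity.
  - intro H. exists z, a, z. repeat split; auto using sim_refl, sim_sym. apply mul_zero. reflexivity.
Qed.

Lemma MulR_distr a b c y x : AddR a b y -> MulR c y x ->
  exists u v, MulR c a u /\ MulR c b v /\ AddR u v x.
Proof. intros [y1 [a1 [b1 [Hy1 [Ha1 [Hb1 H1]]]]]] [x2 [c2 [y2 [Hx2 [Hc2 [Hy2 H2]]]]]].
  assert (E : sim y2 y1) by (eapply sim_trans; [exact Hy2 | apply sim_sym; exact Hy1]).
  destruct E as [X2 [X1 [HX2 [HX1 [[t Ht] [_ E]]]]]].
  destruct (mul_ne x2 t) as [q Hq].
  destruct (mul_assoc c2 y2 t q) as [p [Hp1 Hp2]]. eauto.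
  destruct (sim_sub _ _ _ _ E t p Ht Hp1) as [s [Hs Hsp]]. apply mul_comm in Hsp.
  destruct (mul_assoc' c2 s y1 q) as [m [Hm1 Hm2]]. eauto.
  destruct (distr a1 b1 m q) as [u [v [Hu [Hv Huv]]]]. eauto.
  assert (Hm : sim m c) by (eapply sim_trans; [eapply coh; [apply HX1; exact Hs | exact Hm1] | exact Hc2]).
  exists u, v. split; [|split].
  - exists u, m, a1. repeat split; auto using sim_refl.
  - exists v, m, b1. repeat split; auto using sim_refl.
  - exists q, u, v. repeat split; auto using sim_refl.
    eapply sim_trans. eapply coh. apply HX2; exact Ht. exact Hq. exact Hx2.
Qed.

Lemma MulR_negl a b x : (exists y, MulR a b y /\ sim x (neg y)) <-> MulR (neg a) b x.
Proof. split.
  - intros [y [[y1 [a1 [b1 [Hy1 [Ha1 [Hb1 H1]]]]]] Hx]].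
    exists (neg y1), (neg a1), b1. repeat split; auto using sim_neg.
    eapply sim_trans. apply sim_neg, Hy1. apply sim_sym, Hx.
    apply negl. eauto.
  - intros [x1 [a1 [b1 [Hx1 [Ha1 [Hb1 H1]]]]]].
    rewrite <- (neg_neg a1) in H1. apply negl in H1. destruct H1 as [w [Hw ->]].
    exists w. split.
    + exists w, (neg a1), b1. repeat split; auto using sim_refl.
      rewrite <- (neg_neg a). apply sim_neg, Ha1.
    + apply sim_sym, Hx1.
Qed.

Lemma MulR_negr a b x : (exists y, MulR a b y /\ sim x (neg y)) <-> MulR a (neg b) x.
Proof. split.
  - intros [y [[y1 [a1 [b1 [Hy1 [Ha1 [Hb1 H1]]]]]] Hx]].
    exists (neg y1), a1, (neg b1). repeat split; auto using sim_neg.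
    eapply sim_trans. apply sim_neg, Hy1. apply sim_sym, Hx.
    apply negr. eauto.
  - intros [x1 [a1 [b1 [Hx1 [Ha1 [Hb1 H1]]]]]].
    rewrite <- (neg_neg b1) in H1. apply negr in H1. destruct H1 as [w [Hw ->]].
    exists w. split.
    + exists w, a1, (neg b1). repeat split; auto using sim_refl.
      rewrite <- (neg_neg b). apply sim_neg, Hb1.
    + apply sim_sym, Hx1.
Qed.

Lemma MulR_move c a u c0 : MulR c a u -> sim c0 c ->
  exists a0 u0, sim a0 a /\ sim u0 u /\ mul c0 a0 u0.
Proof. intros [u1 [c1 [a1 [Hu1 [Hc1 [Ha1 H1]]]]]] Hc0.
  assert (E : sim c1 c0) by (eapply sim_trans; [exact Hc1 | apply sim_sym; exact Hc0]).
  destruct E as [X [Y [HX [HY [[s Hs] [_ E]]]]]].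
  destruct (mul_ne u1 s) as [w Hw].
  destruct (mul_swap _ _ _ _ _ H1 Hw) as [k [Hk1 Hk2]].
  destruct (sim_sub _ _ _ _ E s k Hs Hk1) as [t [Ht Htk]].
  destruct (mul_assoc c0 t a1 w) as [a0 [Ha0 Hw0]]. eauto.
  exists a0, w. repeat split; auto.
  - eapply sim_trans. eapply coh'. apply HY; exact Ht. exact Ha0. exact Ha1.
  - eapply sim_trans. eapply coh. apply HX; exact Hs. exact Hw. exact Hu1.
Qed.
Lemma MulR_full (Hf : forall a b c x, (exists u v, mul c a u /\ mul c b v /\ add u v x) ->
                                      exists y, add a b y /\ mul c y x)
  a b c u v x : MulR c a u -> MulR c b v -> AddR u v x -> exists y, AddR a b y /\ MulR c y x.
Proof. intros Hu Hv [x3 [u3 [v3 [Hx3 [Hu3 [Hv3 H3]]]]]].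
  destruct (MulR_move _ _ _ c Hu (sim_refl c)) as [a1 [u1 [Ha1 [Hu1 H1]]]].
  destruct (MulR_move _ _ _ c Hv (sim_refl c)) as [b2 [v2 [Hb2 [Hv2 H2]]]].
  assert (E : sim u3 u1) by (eapply sim_trans; [exact Hu3 | apply sim_sym; exact Hu1]).
  destruct E as [X1 [Y1 [HX1 [HY1 [[s1 Hs1] [_ E]]]]]].
  destruct (mul_ne u3 s1) as [p Hp].
  destruct (sim_sub _ _ _ _ E s1 p Hs1 Hp) as [t1 [Ht1 Htp]]. apply mul_comm in Hp.
  destruct (L u3 v3 x3 s1 p H3 Hp) as [q [r [Hq [Hr Hpr]]]].
  destruct (mul_assoc c a1 t1 p) as [a' [Ha'1 Ha'2]]. eauto.
  assert (Er : sim r v2).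
  { eapply sim_trans. eapply coh'. apply HX1; exact Hs1. exact Hr.
    eapply sim_trans. exact Hv3. apply sim_sym. exact Hv2. }
  destruct Er as [X2 [Y2 [HX2 [HY2 [[s2 Hs2] [_ E2]]]]]].
  destruct (mul_ne r s2) as [r' Hr'].
  destruct (sim_sub _ _ _ _ E2 s2 r' Hs2 Hr') as [t2 [Ht2 Htr]]. apply mul_comm in Hr'.
  apply add_comm in Hpr.
  destruct (L r p q s2 r' Hpr Hr') as [q' [p' [Hq' [Hp' Hrp]]]].
  destruct (mul_assoc c b2 t2 r') as [b' [Hb'1 Hb'2]]. eauto.
  apply mul_comm in Hp'.
  destruct (mul_assoc c a' s2 p') as [a'' [Ha''1 Ha''2]]. eauto.
  apply add_comm in Hrp.
  destruct (Hf a'' b' c q') as [y [Hy1 Hy2]]. eauto.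
  exists y. split.
  - exists y, a'', b'. repeat split; auto using sim_refl.
    + eapply sim_trans. eapply coh. apply HX2; exact Hs2. exact Ha''1.
      eapply sim_trans. eapply coh. apply HY1; exact Ht1. exact Ha'1. exact Ha1.
    + eapply sim_trans. eapply coh. apply HY2; exact Ht2. exact Hb'1. exact Hb2.
  - exists q', c, y. repeat split; auto using sim_refl.
    eapply sim_trans. eapply coh'. apply HX2; exact Hs2. exact Hq'.
    eapply sim_trans. eapply coh'. apply HX1; exact Hs1. exact Hq. exact Hx3.
Qed.
Local Notation Q := (mquot_carrier A S).
Local Notation cl := (mcl A S).
Local Notation qadd := (sadd (mquot A S)).
Local Notation qmul := (smul (mquot A S)).
Local Notation qneg := (sneg (mquot A S)).

Lemma mclass_sim a b : mclass A S a = mclass A S b -> sim a b.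
Proof. intro H. assert (Hb : mclass A S b b) by apply sim_refl. rewrite <- H in Hb. exact Hb. Qed.

Lemma exist_eq (C1 C2 : T -> Prop) p1 p2 : C1 = C2 ->
  exist (fun C => exists a, C = mclass A S a) C1 p1 = exist _ C2 p2.
Proof. intro H. subst. f_equal. apply proof_irrelevance. Qed.

Lemma cl_eq a b : cl a = cl b <-> sim a b.
Proof. split.
  - intro H. apply mclass_sim. exact (f_equal (@proj1_sig _ _) H).
  - intro H. apply exist_eq. apply functional_extensionality. intro x.
    apply propositional_extensionality. unfold mclass. split; intro H'.
    + eapply sim_trans. apply sim_sym, H. exact H'.
    + eapply sim_trans. apply H. exact H'.
Qed.

Lemma cl_surj (X : Q) : X = cl (mrep X).
Proof. destruct X as [C HC]. unfold mrep, mcl. simpl.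
  destruct (constructive_indefinite_description _ HC) as [r Hr]. simpl.
  apply exist_eq. exact Hr. Qed.

Lemma ex_cl (X : Q) : exists x, X = cl x.
Proof. exists (mrep X). apply cl_surj. Qed.

Lemma qadd_cl a b c : qadd (cl a) (cl b) (cl c) <-> AddR a b c.
Proof. change (qadd (cl a) (cl b) (cl c)) with (exists a0 b0 c0,
        mclass A S a = mclass A S a0 /\ mclass A S b = mclass A S b0 /\
        mclass A S c = mclass A S c0 /\
        exists c' a' b', sim c' c0 /\ sim a' a0 /\ sim b' b0 /\ add a' b' c').
  split.
  - intros [a0 [b0 [c0 [E1 [E2 [E3 [c' [a' [b' [H1 [H2 [H3 H4]]]]]]]]]]]].
    apply mclass_sim in E1, E2, E3. exists c', a', b'.
    repeat split; auto; eapply sim_trans; eauto; apply sim_sym; auto.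
  - intros [c' [a' [b' [H1 [H2 [H3 H4]]]]]]. exists a, b, c.
    repeat split; auto. exists c', a', b'. auto.
Qed.

Lemma qmul_cl a b c : qmul (cl a) (cl b) (cl c) <-> MulR a b c.
Proof. change (qmul (cl a) (cl b) (cl c)) with (exists a0 b0 c0,
        mclass A S a = mclass A S a0 /\ mclass A S b = mclass A S b0 /\
        mclass A S c = mclass A S c0 /\
        exists c' a' b', sim c' c0 /\ sim a' a0 /\ sim b' b0 /\ mul a' b' c').
  split.
  - intros [a0 [b0 [c0 [E1 [E2 [E3 [c' [a' [b' [H1 [H2 [H3 H4]]]]]]]]]]]].
    apply mclass_sim in E1, E2, E3. exists c', a', b'.
    repeat split; auto; eapply sim_trans; eauto; apply sim_sym; auto.
  - intros [c' [a' [b' [H1 [H2 [H3 H4]]]]]]. exists a, b, c.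
    repeat split; auto. exists c', a', b'. auto.
Qed.

Lemma qneg_cl a : qneg (cl a) = cl (neg a).
Proof. change (qneg (cl a)) with (cl (neg (mrep (cl a)))). apply cl_eq. apply sim_neg.
  apply sim_sym. apply cl_eq. apply cl_surj. Qed.

Lemma qz_cl : szero (mquot A S) = cl z.
Proof. reflexivity. Qed.
Lemma qo_cl : sone (mquot A S) = cl o.
Proof. reflexivity. Qed.

Lemma AddR_comm a b x : AddR a b x -> AddR b a x.
Proof. intros [c' [a' [b' [H1 [H2 [H3 H4]]]]]]. exists c', b', a'. repeat split; auto.
  apply add_comm; auto. Qed.
Lemma MulR_comm a b x : MulR a b x -> MulR b a x.
Proof. intros [c' [a' [b' [H1 [H2 [H3 H4]]]]]]. exists c', b', a'. repeat split; auto.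
  apply mul_comm; auto. Qed.

Ltac qd X x := destruct (ex_cl X) as [x ->].

Lemma quot_distr : forall a b c x : Q,
  (exists y, qadd a b y /\ qmul c y x) -> (exists u v, qmul c a u /\ qmul c b v /\ qadd u v x).
Proof. intros X1 X2 X3 X [Y [H1 H2]]. qd X1 a. qd X2 b. qd X3 c. qd X x. qd Y y.
  rewrite qadd_cl in H1. rewrite qmul_cl in H2.
  destruct (MulR_distr _ _ _ _ _ H1 H2) as [u [v [Hu [Hv Huv]]]].
  exists (cl u), (cl v). rewrite !qmul_cl, qadd_cl. auto. Qed.

Lemma quot_superring : superring (mquot A S).
Proof. unfold superring, comm_multigroup, comm_multimonoid.
  split; [split; [|split; [|split]] | split; [split; [|split] | split; [|split; [|split]]]].
  - intros X1 X2 X3. qd X1 a. qd X2 b. qd X3 c. rewrite !qneg_cl, !qadd_cl. apply AddR_rev.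
  - intros X1 X2. qd X1 a. qd X2 b. rewrite qz_cl, qadd_cl, cl_eq. apply AddR_zero.
  - intros X1 X2 X3 X [Y [H1 H2]]. qd X1 a. qd X2 b. qd X3 c. qd X x. qd Y y.
    rewrite qadd_cl in H1, H2. destruct (AddR_assoc _ _ _ _ _ H1 H2) as [y' [H3 H4]].
    exists (cl y'). rewrite !qadd_cl. auto.
  - intros X1 X2 X. qd X1 a. qd X2 b. qd X x. rewrite !qadd_cl. split; apply AddR_comm.
  - intros X1 X2 X3 X [Y [H1 H2]]. qd X1 a. qd X2 b. qd X3 c. qd X x. qd Y y.
    rewrite qmul_cl in H1, H2. destruct (MulR_assoc _ _ _ _ _ H1 H2) as [y' [H3 H4]].
    exists (cl y'). rewrite !qmul_cl. auto.
  - intros X1 X2 X. qd X1 a. qd X2 b. qd X x. rewrite !qmul_cl. split; apply MulR_comm.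
  - intros X1. qd X1 a. rewrite qo_cl, qmul_cl. exists a, o, a. repeat split; auto using sim_refl.
    apply mul_one.
  - intros X1 X. qd X1 a. qd X x. rewrite qz_cl, qmul_cl, cl_eq. apply MulR_zero.
  - apply quot_distr.
  - intros X1 X2 X. qd X1 a. qd X2 b. qd X x. rewrite qneg_cl, qmul_cl, <- MulR_negl.
    split.
    + intros [Y [H1 H2]]. qd Y y. rewrite qneg_cl, cl_eq in H2. rewrite qmul_cl in H1. eauto.
    + intros [y [H1 H2]]. exists (cl y). rewrite qmul_cl, qneg_cl, cl_eq. auto.
  - intros X1 X2 X. qd X1 a. qd X2 b. qd X x. rewrite qneg_cl, qmul_cl, <- MulR_negr.
    split.
    + intros [Y [H1 H2]]. qd Y y. rewrite qneg_cl, cl_eq in H2. rewrite qmul_cl in H1. eauto.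
    + intros [y [H1 H2]]. exists (cl y). rewrite qmul_cl, qneg_cl, cl_eq. auto.
Qed.

Lemma quot_full : full_superring A -> full_superring (mquot A S).
Proof. intros [_ Hf]. split. apply quot_superring.
  intros X1 X2 X3 X. split. apply quot_distr.
  intros [U [V [H1 [H2 H3]]]]. qd X1 a. qd X2 b. qd X3 c. qd X x. qd U u. qd V v.
  rewrite qmul_cl in H1, H2. rewrite qadd_cl in H3.
  destruct (MulR_full (fun a b c x H => proj2 (Hf a b c x) H) _ _ _ _ _ _ H1 H2 H3) as [y [H4 H5]].
  exists (cl y). rewrite qadd_cl, qmul_cl. auto. Qed.

Lemma quot_domain : ~ S z -> superdomain A -> superdomain (mquot A S).
Proof. intros Hz [_ [Hzo Hd]]. split. apply quot_superring. split.
  - rewrite qz_cl, qo_cl, cl_eq. intros [X [Y [HX [HY [_ [[y Hy] E]]]]]].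
    destruct (proj2 (E y) (ex_intro _ y (conj Hy (mul_one y)))) as [p [_ Hp]].
    apply mul_zl in Hp. subst. apply Hz. apply HY. exact Hy.
  - intros X1 X2. qd X1 a. qd X2 b. rewrite qz_cl, qmul_cl, !cl_eq. split.
    + intros [c' [a' [b' [H1 [H2 [H3 H4]]]]]].
      destruct (sim_z _ H1) as [s [Hs Hc]].
      assert (Hcs : mul c' s z) by (apply Hc; reflexivity).
      apply Hd in Hcs. destruct Hcs as [-> | ->]; [| contradiction].
      apply Hd in H4. destruct H4 as [-> | ->].
      * left. apply sim_sym. exact H2.
      * right. apply sim_sym. exact H3.
    + intros [H | H].
      * exists z, z, b. repeat split; auto using sim_refl, sim_sym. apply mul_zl. reflexivity.
      * exists z, a, z. repeat split; auto using sim_refl, sim_sym. apply mul_zero. reflexivity.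
Qed.

Lemma quot_field : ~ S z -> superfield A -> superfield (mquot A S).
Proof. intros Hz [Hd Hf]. split. apply quot_domain; auto.
  intros X1 HX. qd X1 a. rewrite qz_cl in HX.
  assert (Ha : a <> z) by (intros ->; apply HX; reflexivity).
  destruct (Hf a Ha) as [b Hb]. exists (cl b). rewrite qo_cl, qmul_cl.
  exists o, a, b. repeat split; auto using sim_refl. Qed.

End Quot.

Theorem corollary4p6 (T : Type) (A : SROps T) (S : T -> Prop) :
  superring A -> marshall_coherent A S -> ~ S (szero A) ->
  (full_superring A -> full_superring (mquot A S)) /\
  (superdomain A -> superdomain (mquot A S)) /\
  (superfield A -> superfield (mquot A S)).
Proof.
  intros HA HS Hz. split; [|split].
  - apply quot_full; auto.
  - apply quot_domain; auto.
  - apply quot_field; auto.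
Qed.
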